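(* Let $X$ be an anti-linear operator on $H^2(\mathbb{D})$. Then $XM_z=M_zX$ if and only if $X=J_{H^2(\mathbb{D})}M_\theta$ for some $\theta\in H^\infty(\mathbb{D})$.
   Context: $H^2(\mathbb{D})$ is the Hardy space of the unit disc, $M_z$ and $M_\theta$ denote multiplication by $z$ and by $\theta$, $H^\infty(\mathbb{D})$ is the algebra of bounded analytic functions on $\mathbb{D}$, and $J_{H^2(\mathbb{D})}(\sum a_nz^n)=\sum\bar a_nz^n$. *)

(* Defs.v *)
(* H^2(D) is identified with its Taylor-coefficient
   sequences f : nat -> C with sum |f n|^2 < oo (f(z) = sum f n z^n). *)
From Stdlib Require Import Reals.
From Coquelicot Require Import Coquelicot.
Open Scope R_scope.

Definition H2 (f : nat -> C) : Prop := ex_series (fun n => (Cmod (f n)) ^ 2).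

Definition H2norm2 (f : nat -> C) : R := Series (fun n => (Cmod (f n)) ^ 2).

Definition Hinf (t : nat -> C) : Prop :=
  exists M : R, forall z : C, Cmod z < 1 ->
    exists s : C, is_series (fun n => Cmult (t n) (Cpow z n)) s /\ Cmod s <= M.

Definition Mz (f : nat -> C) : nat -> C :=
  fun n => match n with O => RtoC 0 | S k => f k end.

Definition JH2 (f : nat -> C) : nat -> C := fun n => Cconj (f n).

Definition Mtheta (t f : nat -> C) : nat -> C :=
  fun n => sum_n (fun k => Cmult (t k) (f (n - k)%nat)) n.

(* X is a bounded anti-linear operator on H^2(D) (values of X outside H^2 are
   irrelevant) *)
Definition antilinear_op (X : (nat -> C) -> (nat -> C)) : Prop :=
  (forall f, H2 f -> H2 (X f)) /\
  (forall f g, H2 f -> H2 g ->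
     X (fun n => Cplus (f n) (g n)) = (fun n => Cplus (X f n) (X g n))) /\
  (forall (c : C) f, H2 f ->
     X (fun n => Cmult c (f n)) = (fun n => Cmult (Cconj c) (X f n))) /\
  (exists M : R, forall f, H2 f -> H2norm2 (X f) <= M * H2norm2 f).

(* Main.v *)
Require Import Defs.
From Stdlib Require Import Reals.
From Coquelicot Require Import Coquelicot.
From Stdlib Require Import Lra Lia FunctionalExtensionality.
Open Scope R_scope.

Lemma Cconj0 : Cconj (RtoC 0) = RtoC 0.
Proof. unfold Cconj, RtoC; simpl. f_equal; ring. Qed.

Lemma H2_ext f g : (forall n, f n = g n) -> H2 f -> H2 g.
Proof. intros E H. unfold H2 in *. eapply ex_series_ext; [|exact H]. intros n; simpl. rewrite E. reflexivity. Qed.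

Lemma H2_Mz f : H2 f -> H2 (Mz f).
Proof. intros H. unfold H2. apply ex_series_incr_1. exact H. Qed.

Lemma H2_shift f : H2 f -> H2 (fun k => f (S k)).
Proof. intros H. unfold H2 in *. apply ex_series_incr_1 in H. exact H. Qed.

Lemma H2_scal c f : H2 f -> H2 (fun n => Cmult c (f n)).
Proof. intros H. unfold H2 in *.
  eapply ex_series_ext; [| apply (@ex_series_scal_l R_AbsRing R_NormedModule (Cmod c ^ 2)); exact H].
  intros n; simpl. rewrite Cmod_mult. unfold scal; simpl. unfold mult; simpl. ring. Qed.

Lemma H2_conj f : H2 f -> H2 (JH2 f).
Proof. intros H. unfold H2, JH2 in *. eapply ex_series_ext; [|exact H]. intros n. rewrite Cmod_conj. reflexivity. Qed.

Lemma H2norm2_conj f : H2norm2 (JH2 f) = H2norm2 f.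
Proof. unfold H2norm2, JH2. apply Series_ext. intros n. rewrite Cmod_conj. reflexivity. Qed.

Lemma H2_geom_bound f q : Rabs q < 1 -> (forall n, Cmod (f n) ^ 2 <= q ^ n) -> H2 f.
Proof. intros Hq Hb. unfold H2. eapply (@ex_series_le R_AbsRing R_CompleteNormedModule).
  - intros n. simpl. unfold norm; simpl. rewrite Rabs_pos_eq. apply Hb. pose proof (Cmod_ge_0 (f n)); nra.
  - eexists. apply is_series_geom. exact Hq. Qed.

Definition e0 : nat -> C := fun n => match n with O => RtoC 1 | S _ => RtoC 0 end.

Lemma H2_e0 : H2 e0.
Proof. apply (H2_geom_bound _ (1/2)). rewrite Rabs_pos_eq; lra.
  intros [|n]; simpl. rewrite Cmod_1. lra. rewrite Cmod_0. 
  assert (0 < (1/2)^ S n) by (apply pow_lt; lra). simpl in H. nra. Qed.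


Lemma series_abs_le (a : nat -> C) (c : nat -> R) E Cc :
  is_series a E -> is_series c Cc -> (forall n, Cmod (a n) <= c n) -> Cmod E <= Cc.
Proof.
  intros Ha Hc Hb.
  assert (P : forall N, Cmod (sum_n a N) <= sum_n c N).
  { induction N. rewrite !sum_O. apply Hb.
    rewrite !sum_Sn. eapply Rle_trans. apply Cmod_triangle.
    change (plus (sum_n c N) (c (S N))) with (sum_n c N + c (S N)). specialize (Hb (S N)). lra. }
  assert (L : is_lim_seq (fun N => Cmod (sum_n a N)) (Cmod E)).
  { unfold is_lim_seq. eapply filterlim_comp. exact Ha. exact (filterlim_norm E). }
  assert (Hc2 : is_lim_seq (sum_n c) Cc) by exact Hc.
  pose proof (is_lim_seq_le _ _ _ _ P L Hc2). simpl in H. exact H.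
Qed.

Lemma series_nonneg (u : nat -> R) l : is_series u l -> (forall n, 0 <= u n) -> 0 <= l.
Proof.
  intros Hu Hp.
  assert (P : forall N, 0 <= sum_n u N).
  { induction N. rewrite sum_O. apply Hp. rewrite sum_Sn.
    change (plus (sum_n u N) (u (S N))) with (sum_n u N + u (S N)). specialize (Hp (S N)). lra. }
  assert (Hu2 : is_lim_seq (sum_n u) l) by exact Hu.
  pose proof (is_lim_seq_le (fun _ => 0) _ _ _ P (is_lim_seq_const 0) Hu2). simpl in H. exact H.
Qed.

Lemma is_series_Mz (g : nat -> C) l : is_series g l -> is_series (Mz g) l.
Proof.
  intros H. apply is_series_decr_1.
  match goal with |- is_series _ ?x => replace x with l end. exact H.
  simpl. change (l = Cplus l (Copp (RtoC 0))). destruct l; unfold Cplus, Copp, RtoC; simpl; f_equal; ring.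
Qed.

Lemma CS (a b : nat -> C) E : H2 a -> H2 b -> 0 < H2norm2 b ->
  is_series (fun n => Cmult (a n) (b n)) E -> Cmod E ^ 2 <= H2norm2 a * H2norm2 b.
Proof.
  intros Ha Hb HB HE.
  set (A := H2norm2 a). set (B := H2norm2 b).
  assert (IA : is_series (fun n => Cmod (a n) ^ 2) A) by (apply Series_correct; exact Ha).
  assert (IB : is_series (fun n => Cmod (b n) ^ 2) B) by (apply Series_correct; exact Hb).
  set (c := fun n => Cmod (a n) * Cmod (b n)).
  assert (Ec : ex_series c).
  { assert (Eb : ex_series (fun n => /2 * (Cmod (a n) ^ 2 + Cmod (b n) ^ 2))).
    { eexists. eapply is_series_ext; [| apply (@is_series_scal_l R_AbsRing R_NormedModule (/2));
        exact (@is_series_plus R_AbsRing R_NormedModule _ _ _ _ IA IB)].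
      intros n; reflexivity. }
    apply (@ex_series_le R_AbsRing R_CompleteNormedModule c _ ) with (2 := Eb).
    intros n. unfold norm; simpl. unfold c, abs; simpl.
      pose proof (Cmod_ge_0 (a n)). pose proof (Cmod_ge_0 (b n)).
      rewrite Rabs_pos_eq by nra. pose proof (pow2_ge_0 (Cmod (a n) - Cmod (b n))). simpl in *. nra. }
  set (Cc := Series c).
  assert (Ic : is_series c Cc) by (apply Series_correct; exact Ec).
  assert (HEC : Cmod E <= Cc).
  { eapply series_abs_le. exact HE. exact Ic. intros n. unfold c. rewrite Cmod_mult. lra. }
  assert (Q : forall t, 0 <= A - 2 * t * Cc + t ^ 2 * B).
  { intros t.
    pose proof (@is_series_plus R_AbsRing R_NormedModule _ _ _ _
      (@is_series_plus R_AbsRing R_NormedModule _ _ _ _ IA (@is_series_scal_l R_AbsRing R_NormedModule (-2 * t) _ _ Ic))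
      (@is_series_scal_l R_AbsRing R_NormedModule (t^2) _ _ IB)) as I0.
    assert (I1 : is_series (fun n => (Cmod (a n) - t * Cmod (b n)) ^ 2) (A + (-2 * t) * Cc + t^2 * B)).
    { eapply is_series_ext; [| exact I0]. intros n. simpl.
      change (Cmod (a n) * (Cmod (a n) * 1) + (-2 * t) * c n + (t * (t * 1)) * (Cmod (b n) * (Cmod (b n) * 1)) = (Cmod (a n) - t * Cmod (b n)) * ((Cmod (a n) - t * Cmod (b n)) * 1)).
      unfold c. ring. }
    apply series_nonneg in I1. lra. intros n. apply pow2_ge_0. }
  assert (0 <= Cc) by (pose proof (Cmod_ge_0 E); lra).
  specialize (Q (Cc / B)).
  replace (A - 2 * (Cc / B) * Cc + (Cc / B) ^ 2 * B) with ((A * B - Cc ^ 2) / B) in Q by (field; apply Rgt_not_eq; exact HB).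
  assert (0 <= A * B - Cc ^ 2).
  { apply Rmult_le_reg_r with (/ B). apply Rinv_0_lt_compat; exact HB. rewrite Rmult_0_l. exact Q. }
  pose proof (Cmod_ge_0 E). nra.
Qed.


Lemma decomp X (HX : antilinear_op X) (Hc : forall f, H2 f -> X (Mz f) = Mz (X f)) f (Hf : H2 f) :
  X f = fun n => Cplus (Cmult (Cconj (f 0%nat)) (X e0 n)) (Mz (X (fun k => f (S k))) n).
Proof.
  destruct HX as [HH [Hadd [Hsc _]]].
  assert (Ef : f = fun n => Cplus (Cmult (f 0%nat) (e0 n)) (Mz (fun k => f (S k)) n)).
  { extensionality n. destruct n; simpl; ring. }
  transitivity (X (fun n => Cplus (Cmult (f 0%nat) (e0 n)) (Mz (fun k => f (S k)) n))).
  { f_equal. exact Ef. }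
  rewrite Hadd; [| apply H2_scal, H2_e0 | apply H2_Mz, H2_shift, Hf].
  rewrite Hsc by apply H2_e0. rewrite Hc by (apply H2_shift; exact Hf). reflexivity.
Qed.

Definition theta (X : (nat -> C) -> (nat -> C)) : nat -> C := fun k => Cconj (X e0 k).

Lemma coef X (HX : antilinear_op X) (Hc : forall f, H2 f -> X (Mz f) = Mz (X f)) :
  forall n f, H2 f -> Cconj (X f n) = sum_n (fun k => Cmult (theta X k) (f (n - k)%nat)) n.
Proof.
  induction n; intros f Hf; rewrite (decomp X HX Hc f Hf); cbn [Mz].
  - rewrite sum_O. rewrite Cplus_conj, Cmult_conj, Cconj_conj, Cconj0. unfold theta. simpl. ring.
  - rewrite sum_Sn. rewrite Cplus_conj, Cmult_conj, Cconj_conj.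
    rewrite (IHn (fun k => f (S k))) by (apply H2_shift; exact Hf).
    rewrite (sum_n_ext_loc (fun k => Cmult (theta X k) (f (S n - k)%nat)) (fun k => Cmult (theta X k) (f (S (n - k))%nat))).
    2:{ intros k Hk. f_equal. f_equal. lia. }
    replace (S n - S n)%nat with 0%nat by lia.
    change (plus ?a ?b) with (Cplus a b). unfold theta. ring.
Qed.

Lemma coef_fun X (HX : antilinear_op X) (Hc : forall f, H2 f -> X (Mz f) = Mz (X f)) f :
  H2 f -> X f = JH2 (Mtheta (theta X) f).
Proof.
  intros Hf. extensionality n. unfold JH2, Mtheta. rewrite <- (coef X HX Hc n f Hf).
  rewrite Cconj_conj. reflexivity.
Qed.

Lemma converse (theta0 : nat -> C) X :
  (forall f, H2 f -> X f = JH2 (Mtheta theta0 f)) -> forall f, H2 f -> X (Mz f) = Mz (X f).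
Proof.
  intros H f Hf. rewrite (H _ (H2_Mz f Hf)), (H f Hf). extensionality n.
  unfold JH2, Mtheta. destruct n; cbn [Mz].
  - rewrite sum_O. simpl. replace (Cmult (theta0 0%nat) (RtoC 0)) with (RtoC 0) by ring. apply Cconj0.
  - rewrite sum_Sn. f_equal.
    replace (S n - S n)%nat with 0%nat by lia. cbn [Mz].
    rewrite (sum_n_ext_loc (fun k => Cmult (theta0 k) (Mz f (S n - k)%nat)) (fun k => Cmult (theta0 k) (f (n - k)%nat))).
    2:{ intros k Hk. f_equal. replace (S n - k)%nat with (S (n - k)) by lia. reflexivity. }
    set (s := sum_n _ n). change (Cplus s (Cmult (theta0 (S n)) (RtoC 0)) = s). ring.
Qed.


Definition qv (cw : C) (N : nat) : nat -> C :=
  fun n => if Nat.leb n N then Cpow cw n else RtoC 0.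

Fixpoint Sq (r2 : R) (N : nat) : R := match N with O => 1 | S N => 1 + r2 * Sq r2 N end.

Lemma qv0 cw : qv cw 0 = e0.
Proof. extensionality n. destruct n; reflexivity. Qed.

Lemma qv_shift cw N : (fun k => qv cw (S N) (S k)) = (fun k => Cmult cw (qv cw N k)).
Proof. extensionality k. unfold qv. simpl. destruct (Nat.leb k N); [reflexivity | ring]. Qed.

Lemma qv_S0 cw N : qv cw (S N) 0%nat = RtoC 1.
Proof. reflexivity. Qed.

Lemma pow_sq x n : (x ^ n) ^ 2 = (x ^ 2) ^ n.
Proof. rewrite <- !pow_mult. f_equal. lia. Qed.

Lemma H2_qv w N : Cmod w < 1 -> H2 (qv (Cconj w) N).
Proof. intros Hw. pose proof (Cmod_ge_0 w).
  apply (H2_geom_bound _ (Cmod w ^ 2)). rewrite Rabs_pos_eq; nra.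
  intros n. unfold qv. destruct (Nat.leb n N).
  - rewrite Cmod_pow, Cmod_conj, pow_sq. lra.
  - rewrite Cmod_0. simpl. rewrite Rmult_0_l. apply pow_le. nra.
Qed.

Lemma is_series_R_cons (u : nat -> R) a l : is_series u l ->
  is_series (fun n => match n with O => a | S k => u k end) (a + l).
Proof. intros H. apply is_series_decr_1.
  match goal with |- is_series _ ?x => replace x with l end. exact H.
  assert (E: forall x y : R, x = y + x + - y) by (intros; ring). apply E. Qed.

Lemma is_series_val {K : AbsRing} {V : NormedModule K} (a : nat -> V) l l' :
  is_series a l -> l = l' -> is_series a l'.
Proof. intros H E. subst. exact H. Qed.

Lemma is_series_zero : is_series (fun _ : nat => 0) 0.
Proof.
  assert (Z : forall N, sum_n (fun _ : nat => 0) N = 0).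
  { induction N. rewrite sum_O. reflexivity. rewrite sum_Sn, IHN. change (0 + 0 = 0). ring. }
  assert (H : is_lim_seq (sum_n (fun _ : nat => 0)) 0).
  { eapply is_lim_seq_ext; [| apply (is_lim_seq_const 0)]. intros N. rewrite Z. reflexivity. }
  exact H.
Qed.

Lemma qv_norm w N : Cmod w < 1 -> is_series (fun n => Cmod (qv (Cconj w) N n) ^ 2) (Sq (Cmod w ^ 2) N).
Proof.
  intros Hw. induction N.
  - rewrite qv0. simpl.
    eapply is_series_val; [eapply is_series_ext; [| apply (is_series_R_cons (fun _ => 0) 1 0); apply is_series_zero] | apply Rplus_0_r].
    intros [|n]; simpl. rewrite Cmod_1. ring. rewrite Cmod_0. ring.
  - eapply is_series_val; [eapply is_series_ext; [| apply (is_series_R_cons (fun n => scal (Cmod w ^ 2) (Cmod (qv (Cconj w) N n) ^ 2)) 1 (Cmod w ^ 2 * Sq (Cmod w ^ 2) N)); apply (@is_series_scal_l R_AbsRing R_NormedModule (Cmod w ^ 2)); exact IHN] | reflexivity].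
    intros [|n].
    + change (1 = Cmod (RtoC 1) ^ 2). rewrite Cmod_1. ring.
    + change (Cmod w ^ 2 * Cmod (qv (Cconj w) N n) ^ 2 = Cmod ((fun k => qv (Cconj w) (S N) (S k)) n) ^ 2).
      rewrite qv_shift. rewrite Cmod_mult, Cmod_conj. ring.
Qed.

Lemma Sq_closed r2 N : r2 <> 1 -> Sq r2 N = (1 - r2 ^ (S N)) / (1 - r2).
Proof. intros H. assert (1 - r2 <> 0) by lra. induction N; simpl Sq.
  - simpl. field. auto.
  - rewrite IHN. simpl. field. auto. Qed.

Lemma sum_geom_closed r2 N : r2 <> 1 -> sum_n (fun n => r2 ^ n) N = (1 - r2 ^ (S N)) / (1 - r2).
Proof. intros H. assert (1 - r2 <> 0) by lra. induction N.
  - rewrite sum_O. simpl. field. auto.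
  - rewrite sum_Sn, IHN. change ((1 - r2 ^ S N) / (1 - r2) + r2 ^ S N = (1 - r2 ^ S (S N)) / (1 - r2)).
    simpl. field. auto. Qed.

Lemma Sq_lim r2 : 0 <= r2 < 1 -> is_lim_seq (Sq r2) (/ (1 - r2)).
Proof. intros H. pose proof (is_series_geom r2) as G. 
  assert (G2 : is_lim_seq (sum_n (fun n => r2 ^ n)) (/ (1 - r2))) by (apply G; rewrite Rabs_pos_eq; lra).
  eapply is_lim_seq_ext; [| exact G2]. intros N. rewrite sum_geom_closed, Sq_closed; auto; lra.
Qed.

Lemma Sq_ge1 r2 N : 0 <= r2 -> 1 <= Sq r2 N.
Proof. intros H. induction N; simpl. lra. nra. Qed.


Lemma V_rec X (HX : antilinear_op X) (Hc : forall f, H2 f -> X (Mz f) = Mz (X f)) w N :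
  Cmod w < 1 -> forall n, JH2 (X (qv (Cconj w) (S N))) n =
    Cplus (theta X n) (Mz (fun k => Cmult (Cconj w) (JH2 (X (qv (Cconj w) N)) k)) n).
Proof.
  intros Hw n. unfold JH2. rewrite (decomp X HX Hc (qv (Cconj w) (S N)) (H2_qv w (S N) Hw)).
  rewrite qv_shift. pose proof HX as [_ [_ [Hsc _]]]. rewrite Hsc by (apply H2_qv; auto).
  rewrite qv_S0. unfold theta. destruct n; cbn [Mz]; repeat rewrite ?Cplus_conj, ?Cmult_conj, ?Cconj_conj, ?Cconj0.
  - replace (Cconj (RtoC 1)) with (RtoC 1) by (unfold Cconj, RtoC; simpl; f_equal; ring). ring.
  - replace (Cconj (RtoC 1)) with (RtoC 1) by (unfold Cconj, RtoC; simpl; f_equal; ring). ring.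
Qed.

Lemma V_series X (HX : antilinear_op X) (Hc : forall f, H2 f -> X (Mz f) = Mz (X f)) w (thw : C) :
  Cmod w < 1 -> is_series (fun n => Cmult (theta X n) (Cpow w n)) thw ->
  forall N, is_series (fun n => Cmult (JH2 (X (qv (Cconj w) N)) n) (Cpow w n)) (Cmult thw (RtoC (Sq (Cmod w ^ 2) N))).
Proof.
  intros Hw Ht. induction N.
  - rewrite qv0. eapply is_series_val; [exact Ht|]. simpl. change (@eq C thw (Cmult thw (RtoC 1))). ring.
  - eapply is_series_val; [eapply is_series_ext; [| apply (is_series_plus _ _ _ _ Ht (is_series_Mz _ _ (is_series_scal_l (Cmult (Cconj w) w) _ _ IHN)))] |].
    + intros n. rewrite (V_rec X HX Hc w N Hw n). destruct n; cbn [Mz Cpow].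
      * change (Cplus (Cmult (theta X 0%nat) 1) (RtoC 0) = Cmult (Cplus (theta X 0%nat) (RtoC 0)) 1). ring.
      * change (Cplus (Cmult (theta X (S n)) (Cmult w (Cpow w n))) (Cmult (Cmult (Cconj w) w) (Cmult (JH2 (X (qv (Cconj w) N)) n) (Cpow w n)))
          = Cmult (Cplus (theta X (S n)) (Cmult (Cconj w) (JH2 (X (qv (Cconj w) N)) n))) (Cmult w (Cpow w n))). ring.
    + assert (E: Cmult (Cconj w) w = RtoC (Cmod w ^ 2)) by (rewrite Cmod2_conj; ring).
      change (@eq C (Cplus thw (Cmult (Cmult (Cconj w) w) (Cmult thw (RtoC (Sq (Cmod w ^ 2) N))))) (Cmult thw (RtoC (1 + Cmod w ^ 2 * Sq (Cmod w ^ 2) N)))).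
      rewrite E, RtoC_plus, RtoC_mult. ring.
Qed.

Lemma theta_Hinf X (HX : antilinear_op X) (Hc : forall f, H2 f -> X (Mz f) = Mz (X f)) :
  Hinf (theta X).
Proof.
  pose proof HX as [HH [_ [_ [M HM]]]].
  exists (sqrt M). intros w Hw.
  set (r2 := Cmod w ^ 2).
  assert (Hr : 0 <= r2 < 1) by (pose proof (Cmod_ge_0 w); unfold r2; split; nra).
  assert (Hth : H2 (theta X)) by (apply (H2_conj (X e0)), HH, H2_e0).
  assert (Hgeo : is_series (fun n => Cmod (Cpow w n) ^ 2) (/ (1 - r2))).
  { eapply is_series_ext; [| apply is_series_geom; rewrite Rabs_pos_eq; lra].
    intros n. rewrite Cmod_pow, pow_sq. reflexivity. }
  assert (Hb : H2 (fun n => Cpow w n)) by (eexists; exact Hgeo).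
  assert (Bn : H2norm2 (fun n => Cpow w n) = / (1 - r2)) by (apply is_series_unique; exact Hgeo).
  assert (Ex : ex_series (fun n => Cmult (theta X n) (Cpow w n))).
  { assert (Eb : ex_series (fun n => /2 * (Cmod (theta X n) ^ 2 + Cmod (Cpow w n) ^ 2))).
    { eexists. eapply is_series_ext; [| apply (@is_series_scal_l R_AbsRing R_NormedModule (/2));
        exact (@is_series_plus R_AbsRing R_NormedModule _ _ _ _ (Series_correct _ Hth) Hgeo)].
      intros n; reflexivity. }
    apply (@ex_series_le C_AbsRing C_CompleteNormedModule _ _) with (2 := Eb).
    intros n. change (norm (Cmult (theta X n) (Cpow w n))) with (Cmod (Cmult (theta X n) (Cpow w n))).
    rewrite Cmod_mult.
    pose proof (Cmod_ge_0 (theta X n)). pose proof (Cmod_ge_0 (Cpow w n)).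
    pose proof (pow2_ge_0 (Cmod (theta X n) - Cmod (Cpow w n))). simpl in *. nra. }
  destruct Ex as [thw Ht]. exists thw. split; [exact Ht|].
  set (a := Cmod thw). set (S := / (1 - r2)).
  assert (HS : 0 < S) by (unfold S; apply Rinv_0_lt_compat; lra).
  assert (Bound : forall N, a ^ 2 * Sq r2 N <= M * S).
  { intros N.
    pose proof (V_series X HX Hc w thw Hw Ht N) as VS.
    pose proof (CS _ _ _ (H2_conj _ (HH _ (H2_qv w N Hw))) Hb (ltac:(rewrite Bn; exact HS)) VS) as K.
    rewrite H2norm2_conj, Bn in K.
    pose proof (HM _ (H2_qv w N Hw)) as K2.
    assert (Eq : H2norm2 (qv (Cconj w) N) = Sq (Cmod w ^ 2) N) by (apply is_series_unique, qv_norm; exact Hw). rewrite Eq in K2.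
    fold r2 in K, K2.
    pose proof (Sq_ge1 r2 N (proj1 Hr)) as Q1.
    rewrite Cmod_mult, Cmod_R, Rabs_pos_eq in K by lra. fold a in K. fold S in K.
    assert (K3 : (a * Sq r2 N) ^ 2 <= M * Sq r2 N * S).
    { eapply Rle_trans. exact K. apply Rmult_le_compat_r; lra. }
    apply Rmult_le_reg_l with (Sq r2 N). lra.
    replace (Sq r2 N * (a ^ 2 * Sq r2 N)) with ((a * Sq r2 N) ^ 2) by ring.
    replace (Sq r2 N * (M * S)) with (M * Sq r2 N * S) by ring. exact K3. }
  assert (L1 : is_lim_seq (fun N => a ^ 2 * Sq r2 N) (a ^ 2 * S)).
  { apply (is_lim_seq_scal_l _ (a ^ 2) S). apply Sq_lim. exact Hr. }
  pose proof (is_lim_seq_le _ _ _ _ Bound L1 (is_lim_seq_const (M * S))) as L. simpl in L.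
  assert (a ^ 2 <= M).
  { apply Rmult_le_reg_r with S. exact HS. exact L. }
  rewrite <- (sqrt_pow2 a) by apply Cmod_ge_0. apply sqrt_le_1_alt. exact H.
Qed.


Theorem proposition10p1 (X : (nat -> C) -> (nat -> C)) (HX : antilinear_op X) :
  (forall f, H2 f -> X (Mz f) = Mz (X f)) <->
  (exists theta : nat -> C, Hinf theta /\
     forall f, H2 f -> X f = JH2 (Mtheta theta f)).
Proof.
  split.
  - intros Hc. exists (theta X). split.
    + apply theta_Hinf; assumption.
    + intros f Hf. apply coef_fun; assumption.
  - intros [t [_ Ht]]. exact (converse t X Ht).
Qed.
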